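(* Let $n\ge 6$ be even. Then the largest $3\cdot|E_{n-2}|$ elements of $E_n$ are exactly the elements of $$\{x+2^{n-1}: x\in E_{n-2}\}\cup\{x+5\cdot 2^{n-3}: x\in E_{n-2}\}\cup\{x+3\cdot 2^{n-2}: x\in E_{n-2}\},$$ and in increasing order they consist of the elements of $E_{n-2}$ shifted by $2^{n-1}$, followed by those shifted by $5\cdot2^{n-3}$, followed by those shifted by $3\cdot 2^{n-2}$ (the last block ending at $M_n=2^n-1$).
   Context: Let $D$ (OEIS A036991) be the set of nonnegative integers $m$ such that, reading the binary expansion of $m$ from the least significant bit to the most significant bit, at every point the number of 1's read so far is at least the number of 0's read so far. For $n\ge1$ let $M_n=2^n-1$ and let the $n$-level be $E_n=D\cap(M_{n-1},M_n]$, i.e. the elements of $D$ whose binary expansion has exactly $n$ digits. *)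

(* Defs.v *)
From mathcomp Require Import all_boot.
Set Implicit Arguments. Unset Strict Implicit. Unset Printing Implicit Defensive.

(* Binary expansion of m, least significant bit first (true = digit 1).
   The fuel m suffices since m./2 < m for m > 0; bits 0 = [::]. *)
Fixpoint bits_aux (fuel m : nat) : seq bool :=
  match fuel with
  | 0 => [::]
  | f.+1 => if m == 0 then [::] else odd m :: bits_aux f m./2
  end.
Definition bits (m : nat) : seq bool := bits_aux m m.

(* m \in D (OEIS A036991): reading the binary expansion from the LSB,
   at every point (#1's read so far) >= (#0's read so far). *)
Definition inD (m : nat) : bool :=
  let s := bits m in
  all (fun k => count negb (take k s) <= count id (take k s))
      (iota 0 (size s).+1).

Definition M (n : nat) : nat := 2 ^ n - 1.

Definition inE (n m : nat) : bool := [&& M n.-1 < m, m <= M n & inD m].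

Definition Eseq (n : nat) : seq nat := [seq m <- iota 0 (M n).+1 | inE n m].

(* Main.v *)
Require Import Defs.
From mathcomp Require Import all_boot.
From mathcomp Require Import zify.

Definition C (s : seq bool) := count negb s <= count id s.
Definition good (s : seq bool) := all (fun k => C (take k s)) (iota 0 (size s).+1).

Fixpoint nbits k m := if k is k'.+1 then odd m :: nbits k' m./2 else [::].

Lemma size_nbits k m : size (nbits k m) = k.
Proof. by elim: k m => //= k IH m; rewrite IH. Qed.

Lemma bits_aux_nbits k : forall m f, 2^k <= m < 2^k.+1 -> m <= f ->
  bits_aux f m = nbits k.+1 m.
Proof.
elim: k => [|k IH] m [|f] /andP[hm1 hm2] hf.
- rewrite expn0 in hm1; lia.
- rewrite expn0 expn1 in hm1 hm2; have -> : m = 1 by lia. by case: f hf.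
- have := expn_gt0 2 k.+1; lia.
- have m0 : (m == 0) = false by apply/eqP; have := expn_gt0 2 k.+1; lia.
  rewrite /= m0; congr (_ :: _); apply: IH; rewrite -divn2.
  + move: hm1 hm2; rewrite !expnS => hm1 hm2; apply/andP; split; lia.
  + lia.
Qed.

Lemma bits_nbits k m : 2^k <= m < 2^k.+1 -> bits m = nbits k.+1 m.
Proof. by move=> h; rewrite /bits; apply: bits_aux_nbits. Qed.

Lemma nbits_add a b y z : y < 2^a ->
  nbits (a + b) (y + 2^a * z) = nbits a y ++ nbits b z.
Proof.
elim: a y => [|a IH] y hy.
- rewrite expn0 in hy; have -> : y = 0 by lia. by rewrite add0n mul1n.
- rewrite addSn /= expnS -mulnA oddD oddM /= addbF halfD oddM /= andbF add0n.
  rewrite mul2n doubleK IH //. rewrite -divn2; rewrite expnS in hy; lia.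
Qed.

Lemma nbits_ones k : nbits k (2^k - 1) = nseq k true.
Proof.
elim: k => [|k IH] //.
have -> : 2^k.+1 - 1 = 1 + 2^1 * (2^k - 1).
  rewrite expnS expn1; have := expn_gt0 2 k; lia.
have := @nbits_add 1 k 1 (2^k - 1) (erefl _). rewrite add1n => ->.
by rewrite IH.
Qed.

Lemma goodP s : reflect (forall k, C (take k s)) (good s).
Proof.
apply: (iffP allP) => h k.
- case: (leqP k (size s)) => hk.
  + apply: h; rewrite mem_iota; lia.
  + rewrite take_oversize ?(ltnW hk) //.
    have := h (size s); rewrite take_size; apply; rewrite mem_iota; lia.
- move=> _; exact: h.
Qed.

Lemma good_cat s t : good (s ++ t) =
  good s && all (fun j => C (s ++ take j t)) (iota 0 (size t).+1).
Proof.
apply/goodP/andP.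
- move=> h; split.
  + apply/goodP => k; case: (ltnP k (size s)) => hk.
    * by have := h k; rewrite take_cat hk.
    * rewrite take_oversize //.
      by have := h (size s); rewrite take_cat ltnn subnn take0 cats0.
  + apply/allP => j _.
    by have := h (size s + j); rewrite take_cat ltnNge leq_addr /= addKn.
- move=> [/goodP hs /allP ht] k; rewrite take_cat; case: ifP => hk.
  + exact: hs.
  + case: (leqP (k - size s) (size t)) => hj.
    * apply: ht; rewrite mem_iota; lia.
    * rewrite take_oversize ?(ltnW hj) //.
      have := ht (size t); rewrite take_size; apply; rewrite mem_iota; lia.
Qed.

Lemma count_sum s : count id s + count negb s = size s.
Proof. by elim: s => //= b s IH; case: b => /=; lia. Qed.

Lemma good_cat3 s t : odd (size s) ->
  t \in [:: [:: true]; [:: true; false; true]; [:: false; true; true];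
           [:: true; true; true]] -> good (s ++ t) = good s.
Proof.
move=> hs ht; rewrite good_cat.
case hg: (good s) => //=.
have hC : C s by have := (goodP _ hg) (size s); rewrite take_size.
move: hC; rewrite /C => hC.
have hsum := count_sum s.
have hp := odd_double_half (size s); rewrite hs /= -muln2 in hp.
move: ht; rewrite !inE => /or4P[]/eqP-> /=; rewrite /C !count_cat /=;
  repeat (apply/andP; split); try lia.
Qed.

Definition F a := [seq y <- iota 0 (2^a) | inD (2^a + y)].

Lemma coreD a t y : odd a -> y < 2^a -> t \in [:: 5; 6; 7] ->
  inD (t * 2^a + y) = inD (2^a + y).
Proof.
move=> ha hy ht.
change (good (bits (t * 2^a + y)) = good (bits (2^a + y))).
have e2 : bits (2^a + y) = nbits a y ++ [:: true].
  rewrite (@bits_nbits a); last by rewrite expnS; apply/andP; split; lia.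
  by rewrite -addn1 (addnC _ y) -[2^a]muln1 nbits_add.
have e1 : bits (t * 2^a + y) = nbits a y ++ nbits 3 t.
  rewrite (@bits_nbits a.+2); last first.
    move: ht; rewrite !inE !expnS => /or3P[]/eqP-> ; apply/andP; split; lia.
  by rewrite -addn3 (addnC _ y) mulnC nbits_add.
rewrite e1 e2 (@good_cat3 _ [:: true]) ?size_nbits //.
rewrite good_cat3 ?size_nbits //.
by move: ht; rewrite !inE => /or3P[]/eqP->.
Qed.

Lemma Eseq_small a : Eseq a.+1 = map (addn (2^a)) (F a).
Proof.
rewrite /Eseq.
have -> : (M a.+1).+1 = 2^a + 2^a by rewrite /M expnS; have := expn_gt0 2 a; lia.
rewrite iotaD filter_cat add0n.
have -> : [seq m <- iota 0 (2^a) | Defs.inE a.+1 m] = [::].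
  rewrite (eq_in_filter (a2 := pred0)) ?filter_pred0 // => m.
  rewrite mem_iota => /andP[_ hm]; rewrite /Defs.inE /M /=.
  case: ltnP => h //=; lia.
have -> : iota (2^a) (2^a) = map (addn (2^a)) (iota 0 (2^a)) by rewrite -iotaDl addn0.
rewrite /= filter_map /F; congr map; apply: eq_in_filter => y.
rewrite mem_iota => /andP[_ hy]; rewrite /preim /Defs.inE /M /=.
have -> : 2^a - 1 < 2^a + y by lia.
have -> : 2^a + y <= 2^a.+1 - 1 by rewrite expnS; lia.
done.
Qed.

Lemma blk a t s0 : odd a -> t \in [:: 5; 6; 7] -> s0 = t * 2^a ->
  [seq m <- iota s0 (2^a) | Defs.inE a.+3 m] = map (addn (t * 2^a)) (F a).
Proof.
move=> ha ht ->.
have -> : iota (t * 2^a) (2^a) = map (addn (t * 2^a)) (iota 0 (2^a))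
  by rewrite -iotaDl addn0.
rewrite filter_map /F; congr map; apply: eq_in_filter => y.
rewrite mem_iota => /andP[_ hy]; rewrite /preim /Defs.inE /M /=.
have hy' : y < 2^a by lia.
rewrite coreD //.
have h1 : 2^a.+2 - 1 < t * 2^a + y.
  move: ht; rewrite !inE !expnS => /or3P[]/eqP-> ; lia.
have h2 : t * 2^a + y <= 2^a.+3 - 1.
  move: ht; rewrite !inE !expnS => /or3P[]/eqP-> ; lia.
by rewrite h1 h2.
Qed.

Lemma Eseq_big a : odd a -> Eseq a.+3 =
  [seq m <- iota 0 (5 * 2^a) | Defs.inE a.+3 m] ++ map (addn (5 * 2^a)) (F a) ++
  map (addn (6 * 2^a)) (F a) ++ map (addn (7 * 2^a)) (F a).
Proof.
move=> ha; rewrite /Eseq.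
have -> : (M a.+3).+1 = 5 * 2^a + 2^a + 2^a + 2^a
  by rewrite /M !expnS; have := expn_gt0 2 a; lia.
rewrite (iotaD 0 (5 * 2^a + 2^a + 2^a)) (iotaD 0 (5 * 2^a + 2^a)) (iotaD 0 (5 * 2^a)).
rewrite !filter_cat -!catA.
congr (_ ++ _ ++ _ ++ _); apply: blk => //; lia.
Qed.

Lemma Eseq_last n : 1 <= n -> last 0 (Eseq n) = M n.
Proof.
move=> hn; rewrite /Eseq.
have -> : (M n).+1 = M n + 1 by rewrite addn1.
rewrite iotaD filter_cat add0n /=.
have -> : Defs.inE n (M n).
  case: n hn => // k _.
  rewrite /Defs.inE /M /= leqnn /=; apply/andP; split.
  + rewrite expnS; have := expn_gt0 2 k; lia.
  + change (good (bits (2^k.+1 - 1))).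
    rewrite (@bits_nbits k); last first.
      rewrite expnS; have := expn_gt0 2 k; move=> ?; apply/andP; split; lia.
    rewrite nbits_ones; apply/goodP => j.
    elim: j (k.+1) => [|j IH] [|m] //=. move: (IH m); rewrite /C /= => h; lia.
by rewrite cats1 last_rcons.
Qed.

Theorem proposition8 (n : nat) :
  6 <= n -> ~~ odd n ->
  3 * size (Eseq (n - 2)) <= size (Eseq n) /\
  drop (size (Eseq n) - 3 * size (Eseq (n - 2))) (Eseq n) =
    [seq x + 2 ^ (n - 1) | x <- Eseq (n - 2)] ++
    [seq x + 5 * 2 ^ (n - 3) | x <- Eseq (n - 2)] ++
    [seq x + 3 * 2 ^ (n - 2) | x <- Eseq (n - 2)] /\
  last 0 (Eseq n) = M n.
Proof.
move=> h6 hev.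
have [a ha] : exists a, n = a.+3 by exists (n - 3); lia.
subst n.
have hodd : odd a by move: hev => /=; rewrite !negbK.
have -> : a.+3 - 2 = a.+1 by lia.
have -> : a.+3 - 1 = a.+2 by lia.
have -> : a.+3 - 3 = a by lia.
rewrite (@Eseq_last a.+3) // Eseq_small Eseq_big // !size_cat !size_map.
set k := size (F a); set L := [seq m <- iota 0 (5 * 2^a) | Defs.inE a.+3 m].
split; first lia.
split; last done.
have -> : size L + (k + (k + k)) - 3 * k = size L by lia.
rewrite drop_size_cat // -!map_comp.
congr (_ ++ _ ++ _); apply: eq_map => y /=; rewrite ?expnS; lia.
Qed.
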